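(* The function $g(x)=\frac{x}{\sqrt{1-x^2}}\log\left(\frac1x\right)-\arcsin(x)\log\left(\frac{1}{\arcsin(x)}\right)$ is increasing from $(0,1)$ onto $\left(0,\frac{\pi}{2}\log\frac{\pi}{2}\right)$. In particular, for $x\in(0,1)$, $$x^{x/\sqrt{1-x^2}}<\arcsin(x)^{\arcsin(x)}<\left(\frac{\pi}{2}\right)^{\pi/2}x^{x/\sqrt{1-x^2}}.$$ *)

(* Defs.v *)
From Stdlib Require Export Reals.
Open Scope R_scope.

Definition g (x : R) : R :=
  x / sqrt (1 - x ^ 2) * ln (1 / x) - asin x * ln (1 / asin x).

(* Main.v *)
Require Import Defs.
From Stdlib Require Import Reals Lra.
From Coquelicot Require Import Coquelicot.
Open Scope R_scope.

Definition h (t : R) : R := t * ln t - sin t / cos t * ln (sin t).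
Definition h' (t : R) : R := ln t - ln (sin t) / (cos t ^ 2).
Definition L0 : R := PI / 2 * ln (PI / 2).

Lemma h_der t : 0 < t < PI/2 -> is_derive h t (h' t).
Proof.
  intros [H0 H1].
  assert (Hs : 0 < sin t) by (apply sin_gt_0; lra).
  assert (Hc : 0 < cos t) by (apply cos_gt_0; lra).
  unfold h, h'. auto_derive.
  - repeat split; lra.
  - pose proof (sin2_cos2 t). unfold Rsqr in *. field_simplify; try lra.
  apply (f_equal (fun z => z / cos t ^ 2)). transitivity (ln t * cos t^2 - ln (sin t)*(sin t*sin t+cos t*cos t)); [ring| rewrite H; ring].
Qed.

Lemma sc_facts t : 0 < t < PI/2 ->
  0 < sin t /\ 0 < cos t /\ sin t < 1 /\ sin t * sin t + cos t * cos t = 1 /\ sin t < t.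
Proof.
  intros [H0 H1].
  assert (Hs : 0 < sin t) by (apply sin_gt_0; lra).
  assert (Hc : 0 < cos t) by (apply cos_gt_0; lra).
  pose proof (sin2_cos2 t) as E. unfold Rsqr in E.
  pose proof (sin_lt_x t H0).
  repeat split; try lra. nra.
Qed.

Lemma ln_neg s : 0 < s < 1 -> ln s < 0.
Proof. intros [H0 H1]. rewrite <- ln_1. apply ln_increasing; lra. Qed.

Lemma h'_pos t : 0 < t < PI/2 -> 0 < h' t.
Proof.
  intros Ht. destruct (sc_facts t Ht) as (Hs & Hc & Hs1 & E & Hst).
  unfold h'.
  assert (Hl : ln (sin t) < ln t) by (apply ln_increasing; lra).
  assert (Hl0 : ln (sin t) < 0) by (apply ln_neg; lra).
  set (q := ln (sin t) / cos t ^ 2).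
  assert (Hq : q * (cos t * cos t) = ln (sin t)) by (unfold q; field; lra).
  assert (Hq0 : q < 0).
  { destruct (Rlt_or_le q 0); auto. nra. }
  nra.
Qed.

Lemma h_incr a b : 0 < a -> a < b -> b < PI/2 -> h a < h b.
Proof.
  intros Ha Hab Hb.
  destruct (MVT_cor2 h h' a b Hab) as (c & Hc & Hc2).
  { intros c Hc. apply is_derive_Reals. apply h_der. lra. }
  assert (0 < h' c) by (apply h'_pos; lra). nra.
Qed.

Lemma h_cont t : 0 < t < PI/2 -> continuity_pt h t.
Proof.
  intros Ht. apply derivable_continuous_pt.
  exists (h' t). apply is_derive_Reals. apply h_der. auto.
Qed.

Lemma ln_le_sub x : 0 < x -> ln x <= x - 1.
Proof. intros Hx. pose proof (exp_ineq1_le (ln x)). rewrite exp_ln in H; lra. Qed.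

Lemma ulnu u : 0 < u -> - (u * ln u) <= 2 * sqrt u.
Proof.
  intros Hu. set (r := sqrt u).
  assert (Hr : 0 < r) by (apply sqrt_lt_R0; auto).
  assert (Hu' : u = r * r) by (unfold r; rewrite sqrt_sqrt; lra).
  rewrite Hu', ln_mult by lra.
  pose proof (ln_le_sub (/ r) (Rinv_0_lt_compat r Hr)) as H.
  rewrite ln_Rinv in H by lra.
  assert (r * r * (/ r) = r) by (field; lra).
  assert (r * /r = 1) by (field; lra).
  assert (0 < / r) by (apply Rinv_0_lt_compat; auto).
  nra.
Qed.

Lemma h_lb t : 0 < t < PI/2 -> t * ln t <= h t.
Proof.
  intros Ht. destruct (sc_facts t Ht) as (Hs & Hc & Hs1 & E & Hst).
  assert (Hl0 : ln (sin t) < 0) by (apply ln_neg; lra).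
  assert (0 < sin t / cos t) by (apply Rdiv_lt_0_compat; auto).
  unfold h. nra.
Qed.

Lemma h_ub t : 0 < t < PI/2 -> h t <= t * ln t + cos t.
Proof.
  intros Ht. destruct (sc_facts t Ht) as (Hs & Hc & Hs1 & E & Hst).
  pose proof (ln_le_sub (/ sin t) (Rinv_0_lt_compat _ Hs)) as H.
  rewrite ln_Rinv in H by lra.
  set (s := sin t) in *. set (c := cos t) in *.
  assert (E1 : s / c = s * / c) by reflexivity.
  assert (Hic : c * / c = 1) by (field; lra).
  assert (His : s * / s = 1) by (field; lra).
  assert (0 < / c) by (apply Rinv_0_lt_compat; auto).
  assert (0 < / s) by (apply Rinv_0_lt_compat; auto).
  unfold h. fold s c. rewrite E1.
  assert (K1 : - (s * / c * ln s) <= s * / c * (/ s - 1)).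
  { assert (0 < s * / c) by nra. nra. }
  assert (K2 : s * / c * (/ s - 1) = / c * (1 - s)) by (field; lra).
  assert (K3 : / c * (1 - s) <= c).
  { assert (c - / c * (1 - s) = / c * (c * c - 1 + s)) by (field; lra).
    replace (c * c - 1 + s) with (s - s * s) in H2 by lra.
    assert (0 <= / c * (s - s * s)) by nra. lra. }
  lra.
Qed.

Lemma cos_le t : 0 < t < PI/2 -> cos t <= PI/2 - t.
Proof. intros Ht. rewrite <- sin_shift. left. apply sin_lt_x. lra. Qed.

Lemma lnP_pos : 0 < ln (PI/2).
Proof. rewrite <- ln_1. apply ln_increasing; [lra| apply PI2_1]. Qed.

Lemma tlnt_le t : 0 < t <= PI/2 -> t * ln t <= L0.
Proof.
  intros Ht. pose proof lnP_pos. unfold L0.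
  destruct (Rle_or_lt t 1).
  - assert (ln t <= 0) by (rewrite <- ln_1; apply ln_le; lra). nra.
  - assert (0 < ln t) by (rewrite <- ln_1; apply ln_increasing; lra).
    assert (ln t <= ln (PI/2)) by (apply ln_le; lra). nra.
Qed.

Lemma tlnt_lb b : 0 < b < PI/2 -> L0 - 2 * (PI/2 - b) <= b * ln b.
Proof.
  intros Hb. unfold L0. set (P := PI/2) in *.
  assert (HP : 1 < P) by apply PI2_1.
  assert (HP2 : P <= 2) by (unfold P; pose proof PI_4; lra).
  pose proof (ln_le_sub (P / b)) as H.
  rewrite ln_div in H by lra.
  pose proof (ln_le_sub P) as H2.
  assert (b * (P / b) = P) by (field; lra).
  assert (H3 : ln P - ln b <= P / b - 1) by (apply H; apply Rdiv_lt_0_compat; lra).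
  assert (ln P <= 1) by (apply Rle_trans with (P - 1); [apply H2; lra| lra]).
  nra.
Qed.

Lemma h_small_ub t : 0 < t <= 1/2 -> h t <= 4 * sqrt t.
Proof.
  intros Ht. assert (Ht' : 0 < t < PI/2) by (pose proof PI2_1; lra).
  destruct (sc_facts t Ht') as (Hs & Hc & Hs1 & E & Hst).
  assert (Hc2 : 1/2 <= cos t) by nra.
  assert (ln t <= 0) by (rewrite <- ln_1; apply ln_le; lra).
  pose proof (ulnu (sin t) Hs).
  assert (sqrt (sin t) <= sqrt t) by (apply sqrt_le_1; lra).
  assert (0 <= - (sin t * ln (sin t))).
  { assert (ln (sin t) < 0) by (apply ln_neg; lra). nra. }
  unfold h.
  assert (E1 : - (sin t / cos t * ln (sin t)) = / cos t * (- (sin t * ln (sin t)))) by (field; lra).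
  assert (/ cos t <= 2).
  { apply Rmult_le_reg_l with (cos t); [lra|]. rewrite Rinv_r by lra. lra. }
  assert (0 < / cos t) by (apply Rinv_0_lt_compat; lra).
  assert (/ cos t * (- (sin t * ln (sin t))) <= 2 * (2 * sqrt t)).
  { apply Rmult_le_compat; lra. }
  nra.
Qed.

Lemma h_small_lb t : 0 < t < PI/2 -> - (2 * sqrt t) <= h t.
Proof. intros Ht. pose proof (h_lb t Ht). pose proof (ulnu t (proj1 Ht)). lra. Qed.

Lemma sqrt_sq_le e : 0 < e -> forall s, 0 <= s -> s <= Rsqr e -> sqrt s <= e.
Proof.
  intros He s Hs Hse. rewrite <- (sqrt_Rsqr e) by lra.
  apply sqrt_le_1; auto. apply Rle_0_sqr.
Qed.

Lemma h_pos t : 0 < t < PI/2 -> 0 < h t.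
Proof.
  intros Ht.
  set (t1 := Rmin (t/2) (1/2)).
  assert (Ht1 : 0 < t1 /\ t1 < t) by (unfold t1; split; [apply Rmin_glb_lt; lra | pose proof (Rmin_l (t/2) (1/2)); lra]).
  assert (H1 : h t1 < h t) by (apply h_incr; lra).
  destruct (Rle_or_lt (h t1) 0) as [Hn|Hp]; [|lra].
  destruct (Req_dec (h t1) 0) as [Hz|Hz]; [lra|].
  set (e := - h t1).
  assert (He : 0 < e) by (unfold e; lra).
  set (s := Rmin (t1/2) (Rsqr (e/4))).
  assert (Hsq : 0 < Rsqr (e/4)) by (apply Rlt_0_sqr; lra).
  assert (Hs : 0 < s /\ s < t1) by (unfold s; split; [apply Rmin_glb_lt; lra | pose proof (Rmin_l (t1/2) (Rsqr (e/4))); lra]).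
  assert (sqrt s <= e/4) by (apply sqrt_sq_le; [lra|lra|unfold s; apply Rmin_r]).
  assert (h s < h t1) by (apply h_incr; lra).
  pose proof (h_small_lb s ltac:(lra)). unfold e in *. lra.
Qed.

Lemma h_ltL0 t : 0 < t < PI/2 -> h t < L0.
Proof.
  intros Ht. set (t2 := (t + PI/2)/2).
  assert (H1 : h t < h t2) by (apply h_incr; unfold t2; lra).
  destruct (Rle_or_lt (h t2) L0) as [Hn|Hp]; [lra|].
  set (e := h t2 - L0).
  set (s := Rmax ((t2 + PI/2)/2) (PI/2 - e/2)).
  assert (Hs : t2 < s < PI/2).
  { unfold s, t2 in *. split.
    - eapply Rlt_le_trans; [|apply Rmax_l]. lra.
    - apply Rmax_lub_lt; unfold e; lra. }
  assert (PI/2 - e/2 <= s) by apply Rmax_r.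
  assert (h t2 < h s) by (apply h_incr; unfold t2 in *; lra).
  pose proof (h_ub s ltac:(unfold t2 in *; lra)).
  pose proof (cos_le s ltac:(unfold t2 in *; lra)).
  pose proof (tlnt_le s ltac:(unfold t2 in *; lra)).
  unfold e in *. lra.
Qed.

Lemma asin_pos x : 0 < x < 1 -> 0 < asin x < PI/2.
Proof.
  intros Hx. destruct (asin_bound_lt x ltac:(lra)) as [A B]. split; auto.
  apply sin_increasing_0; try lra. rewrite sin_0, sin_asin; lra.
Qed.

Lemma g_h x : 0 < x < 1 -> g x = h (asin x).
Proof.
  intros Hx. pose proof (asin_pos x Hx).
  unfold g, h. rewrite sin_asin by lra. rewrite cos_asin by lra. rewrite Rsqr_pow2.
  replace (1 / x) with (/ x) by (unfold Rdiv; ring). replace (1 / asin x) with (/ asin x) by (unfold Rdiv; ring).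
  rewrite !ln_Rinv by lra. ring.
Qed.

Theorem lemma4p9 :
  (* g is (strictly) increasing on (0,1) *)
  (forall x y : R, 0 < x -> x < y -> y < 1 -> g x < g y) /\
  (* g maps (0,1) onto (0, (pi/2) log(pi/2)) *)
  (forall y : R,
     (exists x : R, 0 < x < 1 /\ g x = y) <-> 0 < y < PI / 2 * ln (PI / 2)) /\
  (* in particular, the two-sided power inequality *)
  (forall x : R, 0 < x < 1 ->
     Rpower x (x / sqrt (1 - x ^ 2)) < Rpower (asin x) (asin x) /\
     Rpower (asin x) (asin x) <
       Rpower (PI / 2) (PI / 2) * Rpower x (x / sqrt (1 - x ^ 2))).
Proof.
  split; [|split].
  - intros x y Hx Hxy Hy.
    rewrite (g_h x) by lra. rewrite (g_h y) by lra.
    pose proof (asin_pos x ltac:(lra)). pose proof (asin_pos y ltac:(lra)).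
    apply h_incr; try lra.
    apply sin_increasing_0; try lra. rewrite !sin_asin; lra.
  - intros y; split.
    + intros [x [Hx <-]]. rewrite g_h by auto. pose proof (asin_pos x Hx).
      split; [apply h_pos; auto | apply h_ltL0; auto].
    + intros [Hy1 Hy2]. fold L0 in Hy2.
      pose proof PI2_1 as HP.
      set (a := Rmin (1/2) (Rsqr (y/8))).
      assert (Hsq : 0 < Rsqr (y/8)) by (apply Rlt_0_sqr; lra).
      assert (Ha : 0 < a <= 1/2) by (unfold a; split; [apply Rmin_glb_lt; lra | apply Rmin_l]).
      assert (sqrt a <= y/8) by (apply sqrt_sq_le; [lra|lra|unfold a; apply Rmin_r]).
      assert (Hha : h a < y) by (pose proof (h_small_ub a Ha); lra).
      set (b := Rmax ((a + PI/2)/2) (PI/2 - (L0 - y)/4)).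
      assert (Hb : a < b < PI/2).
      { unfold b. split.
        - eapply Rlt_le_trans; [|apply Rmax_l]. lra.
        - apply Rmax_lub_lt; lra. }
      assert (PI/2 - (L0 - y)/4 <= b) by apply Rmax_r.
      assert (Hhb : y < h b).
      { pose proof (tlnt_lb b ltac:(lra)). pose proof (h_lb b ltac:(lra)). lra. }
      destruct (Ranalysis5.IVT_interv (fun t => h t - y) a b) as [z [Hz1 Hz2]].
      { intros u Hu. apply (continuity_pt_minus h (fun _ => y)).
        - apply h_cont. lra.
        - apply continuity_pt_const. intros p q; reflexivity. }
      { lra. } { lra. } { lra. }
      assert (Hz : 0 < z < PI/2) by lra.
      destruct (sc_facts z Hz) as (Hs & Hc & Hs1 & E & Hst).
      exists (sin z). split; [lra|].
      rewrite g_h by lra. rewrite asin_sin by lra. lra.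
  - intros x Hx. pose proof (asin_pos x Hx) as Ha.
    pose proof (h_pos _ Ha) as H1. pose proof (h_ltL0 _ Ha) as H2.
    rewrite <- g_h in H1, H2 by auto.
    unfold g in H1, H2. unfold L0 in H2.
    replace (1 / x) with (/ x) in H1, H2 by (unfold Rdiv; ring).
    replace (1 / asin x) with (/ asin x) in H1, H2 by (unfold Rdiv; ring).
    rewrite !ln_Rinv in H1, H2 by lra.
    unfold Rpower. split.
    + apply exp_increasing. lra.
    + rewrite <- exp_plus. apply exp_increasing. lra.
Qed.
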